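(* There exists a constant $0<c'<1$ such that for all integers $m\ge1$, $n>2m$ and all $\sigma_1^2,\dots,\sigma_n^2>0$, $\mathrm{Ent}(\sigma^2_L)\ge c'\,\mathrm{Ent}(\sigma^2_{G^{r}})-c'\ln(2)$, where $L\subset G^{r}$ with $|L|=2m$ consists of $2m$ arms of $G^{r}$ with the largest variances.
   Context: For a positive vector $a$, $\mathrm{Ent}(a)=-\sum_i\hat a_i\ln\hat a_i$ with $\hat a_i=a_i/\sum_ja_j$; $\sigma^2_S=(\sigma_i^2)_{i\in S}$. Let $\underline\sigma^2=\min_i\sigma_i^2$, $G_j=\{i\in[n]:2^{j-1}\le\sigma_i^2/\underline\sigma^2<2^j\}$ for $j=1,\dots,k$ covering $[n]$. $G'_j=G_j$ if $|G_j|\le2m$, otherwise $G'_j\subset G_j$ with $|G'_j|=2m$; $G^{r}=\bigcup_jG'_j$, the choices made to maximize $\mathrm{Ent}(\sigma^2_{G^{r}})$. *)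

(* Defs.v *)
From HB Require Import structures.
From mathcomp Require Import all_boot all_order all_algebra.
From mathcomp Require Import reals exp.
Set Implicit Arguments. Unset Strict Implicit. Unset Printing Implicit Defensive.
Import Order.TTheory GRing.Theory Num.Theory.
Local Open Scope ring_scope.

Section Defs.
Variables (R : realType) (n : nat).

Definition Ent (s : 'I_n -> R) (S : {set 'I_n}) : R :=
  let t := \sum_(i in S) s i in
  - \sum_(i in S) (s i / t) * ln (s i / t).

(* minimum variance (the seed is any element of 'I_n; correct whenever n > 0) *)
Definition varmin (s : 'I_n -> R) : R :=
  \big[Num.min/oapp s 0 [pick i : 'I_n]]_(i < n) s i.

Definition grp (s : 'I_n -> R) (j : nat) : {set 'I_n} :=
  [set i | (2 ^+ j.-1 <= s i / varmin s) && (s i / varmin s < 2 ^+ j)].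

(* Gr is an admissible G^r: Gr = U_j G'_j with G'_j = G_j if |G_j| <= 2m,
   otherwise G'_j a subset of G_j of size 2m (the groups with j >= 1 cover [n]). *)
Definition admissible (m : nat) (s : 'I_n -> R) (Gr : {set 'I_n}) : Prop :=
  forall j : nat, (0 < j)%N ->
    if (#|grp s j| <= 2 * m)%N then Gr :&: grp s j = grp s j
    else #|Gr :&: grp s j| = (2 * m)%N.

Definition Gr_choice (m : nat) (s : 'I_n -> R) (Gr : {set 'I_n}) : Prop :=
  admissible m s Gr /\
  forall Gr' : {set 'I_n}, admissible m s Gr' -> Ent s Gr' <= Ent s Gr.

Definition top_arms (m : nat) (s : 'I_n -> R) (Gr L : {set 'I_n}) : Prop :=
  [/\ L \subset Gr, #|L| = (2 * m)%N &
      forall i j, i \in L -> j \in Gr :\: L -> s j <= s i].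

End Defs.

(* Main.v *)
Require Import Defs.
From HB Require Import structures.
From mathcomp Require Import all_boot all_order all_algebra.
From mathcomp Require Import reals exp.
From mathcomp Require Import ring lra zify.
Import Order.TTheory GRing.Theory Num.Theory.
Local Open Scope ring_scope.

Section Helpers.
Variable R : realType.

Lemma ln_le_sub1 (z : R) : 0 < z -> ln z <= z - 1.
Proof.
move=> z0; have := @le_ln1Dx R (z - 1).
have -> : 1 + (z - 1) = z by ring.
apply; lra.
Qed.

Lemma sub_le_mul_ln (p q : R) : 0 < p -> 0 < q -> q - p <= q * ln (q / p).
Proof.
move=> p0 q0.
have h := @ln_le_sub1 (p / q) (divr_gt0 p0 q0).
have e : ln (p / q) = - ln (q / p).
  by rewrite -lnV ?invf_div // posrE divr_gt0.
rewrite e in h.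
have : - (p / q - 1) <= ln (q / p) by rewrite lerNl.
move=> h2; have := ler_wpM2l (ltW q0) h2.
by rewrite opprB mulrBr mulr1 mulrCA divff ?mulr1 // gt_eqF.
Qed.

Lemma chord (a x S : R) : 0 < a -> a <= x -> x <= S ->
  a * ln (S / a) * (S - x) <= x * ln (S / x) * (S - a).
Proof.
move=> a0 ax xS.
have x0 : 0 < x by apply: lt_le_trans ax.
have S0 : 0 < S by apply: lt_le_trans xS.
have h1 := @sub_le_mul_ln x a x0 a0.
have h2 := @sub_le_mul_ln x S x0 S0.
have e : ln (a / x) = ln (S / x) - ln (S / a).
  rewrite -ln_div ?posrE ?divr_gt0 //; congr ln.
  by field; rewrite !gt_eqF.
rewrite e in h1.
set u := ln (S / x) in h1 h2 *; set w := ln (S / a) in h1 *.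
have k1 : (S - x) * (a - x) <= (S - x) * (a * (u - w)).
  by apply: ler_wpM2l => //; rewrite subr_ge0.
have k2 : (x - a) * (S - x) <= (x - a) * (S * u).
  by apply: ler_wpM2l => //; rewrite subr_ge0.
nra.
Qed.

Lemma exist_grp (x : R) : 1 <= x ->
  exists j : nat, (0 < j)%N /\ 2 ^+ j.-1 <= x < 2 ^+ j.
Proof.
move=> x1.
have x0 : 0 <= x by apply: le_trans x1.
have exP : exists j : nat, x < 2 ^+ j.
  exists (Num.Def.archi_bound x).
  apply: lt_trans (archi_boundP x0) _.
  rewrite -natrX ltr_nat; exact: ltn_expl.
case: (ex_minnP exP) => j xj jmin.
have j0 : (0 < j)%N.
  case: j xj jmin => // ; rewrite expr0 => h; by move: (lt_le_trans h x1); rewrite ltxx.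
exists j; split => //; rewrite xj andbT.
rewrite leNgt; apply/negP => h.
have := jmin _ h; rewrite -{1}(prednK j0) ltnn //.
Qed.

Lemma geo_sum (k : nat) : (\sum_(j < k) 2 ^ j + 1 = 2 ^ k)%N.
Proof.
elim: k => [|k IH]; first by rewrite big_ord0.
by rewrite big_ord_recr /= addnAC IH expnS mul2n addnn.
Qed.

Lemma ag_sum (J : nat) :
  (\sum_(j < J.+1) 2 ^ j * (J.+1 - j) + J + 3 = 2 ^ J.+2)%N.
Proof.
elim: J => [|J IH]; first by rewrite big_ord1.
rewrite big_ord_recl /= expn0 mul1n subn0.
under eq_bigr => i _ do rewrite /bump /= add1n subSS expnS -mulnA.
rewrite -big_distrr /= expnS -IH. move: (\sum_(j < J.+1) _) => X. lia.
Qed.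


Lemma grp0 n (s : 'I_n -> R) : grp s 0 = set0.
Proof.
apply/setP => i; rewrite !inE /= expr0.
by case: (leP 1 (s i / varmin s)) => // h; rewrite ltNge h.
Qed.

Lemma card_rest_grp m n (s : 'I_n -> R) (Gr rest : {set 'I_n}) j :
  rest \subset Gr -> admissible m s Gr -> (#|rest :&: grp s j| <= 2 * m)%N.
Proof.
move=> rG adm.
case: j => [|j]; first by rewrite grp0 setI0 cards0.
have := adm j.+1 isT.
case: ifP => hc.
- move=> _; apply: leq_trans hc; apply: subset_leq_card; exact: subsetIr.
- move=> <-; apply: subset_leq_card; exact: setSI.
Qed.

Lemma part_bound m n J (s : 'I_n -> R) (Gr rest : {set 'I_n})
    (F : 'I_n -> R) (B : nat -> R) :
  rest \subset Gr -> admissible m s Gr ->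
  (forall i, i \in rest -> exists j, (j <= J)%N /\ i \in grp s j) ->
  (forall i, i \in rest -> 0 <= F i) ->
  (forall j i, (j <= J)%N -> i \in rest -> i \in grp s j -> F i <= B j) ->
  (forall j, 0 <= B j) ->
  \sum_(i in rest) F i <= (2 * m)%:R * \sum_(j < J.+1) B (val j).
Proof.
move=> rG adm hex F0 FB B0.
apply: (@le_trans _ _ (\sum_(i in rest) \sum_(j < J.+1)
            (if i \in grp s j then F i else 0))).
  apply: ler_sum => i ir.
  have [j [jJ ij]] := hex i ir.
  rewrite (bigD1 (Ordinal (n:=J.+1) (m:=j) jJ)) //= ij lerDl.
  by apply: sumr_ge0 => k _; case: ifP => // _; exact: F0.
rewrite exchange_big /= mulr_sumr; apply: ler_sum => j _.
rewrite -big_mkcondr /=.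
apply: (@le_trans _ _ (\sum_(i in rest :&: grp s j) B j)).
  rewrite [X in _ <= X](eq_bigl (fun i => (i \in rest) && (i \in grp s j))); last first.
    by move=> i; rewrite inE.
  apply: ler_sum => i /andP [ir ij]; apply: FB => //; exact: (ltn_ord j).
rewrite sumr_const -[B j *+ _]mulr_natl.
apply: ler_wpM2r => //; rewrite ler_nat; exact: (@card_rest_grp m n s Gr rest j rG adm).
Qed.


Lemma exp_arith (J j : nat) : (0 < j)%N -> (j <= J)%N -> J = (J.+1 - j + j.-1)%N.
Proof. lia. Qed.

Lemma varmin_gt0 n (s : 'I_n -> R) (i0 : 'I_n) :
  (forall i, 0 < s i) -> 0 < varmin s.
Proof.
move=> sp; rewrite /varmin.
apply: (big_ind (fun x => 0 < x)) => //.
- by case: pickP => [x _|h] //=; have := h i0.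
- by move=> x y x0 y0; rewrite lt_min x0 y0.
Qed.

Lemma varmin_le n (s : 'I_n -> R) i : varmin s <= s i.
Proof. exact: bigmin_le. Qed.

Lemma Ent_W n (s : 'I_n -> R) (X : {set 'I_n}) :
  (forall i, 0 < s i) -> 0 < \sum_(i in X) s i ->
  Ent s X = (\sum_(i in X) s i)^-1 *
     \sum_(i in X) s i * ln ((\sum_(j in X) s j) / s i).
Proof.
move=> sp tp; rewrite /Ent mulr_sumr -sumrN; apply: eq_bigr => i _.
set t := \sum_(j in X) s j.
have -> : ln (s i / t) = - ln (t / s i).
  by rewrite -lnV ?invf_div // posrE divr_gt0.
by rewrite mulrN opprK mulrA [t^-1 * _]mulrC.
Qed.

End Helpers.

Theorem lemma10 (R : realType) :
  exists c' : R, 0 < c' < 1 /\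
  forall (m n : nat) (s : 'I_n -> R),
    (1 <= m)%N -> (2 * m < n)%N -> (forall i, 0 < s i) ->
    forall Gr L : {set 'I_n},
      Gr_choice m s Gr -> top_arms m s Gr L ->
      Ent s L >= c' * Ent s Gr - c' * ln 2.
Proof.
exists (200%:R^-1); split.
  by rewrite invr_gt0 ltr0n /= invf_lt1 ?ltr0n // ltr1n.
move=> m n s hm hmn sp Gr L [adm _] [LG cL topL].
have L0 : L != set0 by rewrite -card_gt0 cL muln_gt0 hm.
case/set0Pn: L0 => i0 i0L.
set v := varmin s.
have v0 : 0 < v := @varmin_gt0 R n s i0 sp.
case: (arg_minP s i0L) => ia iaL amin.
set a := s ia.
have a0 : 0 < a := sp ia.
set S := \sum_(i in L) s i.
set T := \sum_(i in Gr) s i.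
set rest := Gr :\: L.
set Q := \sum_(i in rest) s i.
set M : R := m%:R.
have M1 : 1 <= M by rewrite /M ler1n.
have TSQ : T = S + Q by rewrite /T (big_setID L) /= (setIidPr LG).
have Q0 : 0 <= Q by apply: sumr_ge0 => i _; exact: ltW.
have S2ma : 2 * M * a <= S.
  rewrite /S; apply: (@le_trans _ _ (\sum_(i in L) a)).
    by rewrite sumr_const cL -[a *+ _]mulr_natl natrM.
  by apply: ler_sum => i iL; exact: amin.
have srest : forall i, i \in rest -> s i <= a.
  by move=> i ir; apply: topL.
have restG : rest \subset Gr by apply: subsetDl.
have va : forall i, 1 <= s i / v by move=> i; rewrite ler_pdivlMr // mul1r varmin_le.
have [J [J0 /andP [aJ1 aJ2]]] := @exist_grp R (a / v) (va ia).
rewrite ler_pdivlMr // in aJ1; rewrite ltr_pdivrMr // in aJ2.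
have a2 : 2 ^+ J * v <= 2 * a.
  by rewrite -(prednK J0) exprS -mulrA ler_pM2l // ltr0n.
have ingrp : forall j i, i \in grp s j ->
    [/\ (0 < j)%N, 2 ^+ j.-1 * v <= s i & s i < 2 ^+ j * v].
  move=> j i; case: j => [|j]; first by rewrite grp0 inE.
  rewrite inE => /andP [h1 h2]; split => //.
    by rewrite -ler_pdivlMr.
  by rewrite -ltr_pdivrMr.
have hex : forall i, i \in rest -> exists j, (j <= J)%N /\ i \in grp s j.
  move=> i ir.
  have [j [j0 /andP [h1 h2]]] := @exist_grp R (s i / v) (va i).
  exists j; split; last by rewrite inE h1 h2.
  have : 2 ^+ j.-1 * v < 2 ^+ J * v.
    rewrite ler_pdivlMr // in h1.
    apply: le_lt_trans h1 _; apply: le_lt_trans aJ2; exact: srest.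
  by rewrite ltr_pM2r // ltr_eXn2l ?ltr1n // -{2}(prednK j0).
have Spos : 0 < S.
  apply: lt_le_trans S2ma; rewrite !mulr_gt0 //; lra.
have Tpos : 0 < T by rewrite TSQ; lra.
have sLS : forall i, i \in L -> s i <= S.
  move=> i iL; rewrite /S (bigD1 i) //= lerDl.
  by apply: sumr_ge0 => k _; exact: ltW.
have sGT : forall i, i \in Gr -> s i <= T.
  move=> i iG; rewrite /T (bigD1 i) //= lerDl.
  by apply: sumr_ge0 => k _; exact: ltW.
have aS : a <= S := sLS ia iaL.
set WL := \sum_(i in L) s i * ln (S / s i).
set WG := \sum_(i in Gr) s i * ln (T / s i).
set Wr := \sum_(i in rest) s i * ln (T / s i).
have eWG : WG = S * ln (T / S) + WL + Wr.
  rewrite /WG (big_setID L) /= (setIidPr LG); congr (_ + _).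
  rewrite /WL /S mulr_suml -big_split; apply: eq_bigr => i iL /=.
  rewrite -mulrDr; congr (_ * _).
  rewrite -lnM ?posrE ?divr_gt0 //; congr ln.
  field; rewrite !gt_eqF //.
set p := ln (T / S).
set l := ln (S / a).
have hp : S * p <= Q.
  have h := @ln_le_sub1 R (T / S) (divr_gt0 Tpos Spos).
  have := ler_wpM2l (ltW Spos) h.
  have -> : S * (T / S - 1) = Q by rewrite TSQ; field; rewrite gt_eqF.
  by [].
have l0 : 0 <= l by apply: ln_ge0; rewrite ler_pdivlMr // mul1r.
have hl : S - a <= S * l := @sub_le_mul_ln R a S a0 Spos.
have hWL : (2 * M - 1) * a * l <= WL.
  have key : a * l * (S *+ #|L| - S) <= WL * (S - a).
    have := @ler_sum _ _ (index_enum _) (fun i => i \in L)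
      (fun i => a * l * (S - s i)) (fun i => s i * ln (S / s i) * (S - a))
      (fun i iL => @chord R a (s i) S a0 (amin i iL) (sLS i iL)).
    by rewrite -mulr_sumr sumrB sumr_const -mulr_suml.
  rewrite cL -[S *+ _]mulr_natl natrM -/M in key.
  have Sa : 0 < S - a.
    have : 2 * a <= S by apply: le_trans S2ma; nra.
    lra.
  have : (2 * M - 1) * a * l * (S - a) <= WL * (S - a).
    apply: le_trans key.
    have : 0 <= (2 * M - 1) * a * l by rewrite !mulr_ge0 //; lra.
    nra.
  by rewrite ler_pM2r.
set q := ln (T / a).
have q0 : 0 <= q.
  by apply: ln_ge0; rewrite ler_pdivlMr // mul1r; apply: le_trans aS _; rewrite TSQ; lra.
have ln2 : ln (2 : R) <= 1.
  have := @ln_le_sub1 R 2 (ltr0Sn R 1); lra.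
have hQ : Q <= (2 * m)%:R * (4 * a).
  have := @part_bound R m n J s Gr rest s (fun j => v * (2 ^ j)%:R) restG adm hex
    (fun i _ => ltW (sp i)).
  have FB : forall j i, (j <= J)%N -> i \in rest -> i \in grp s j -> s i <= v * (2 ^ j)%:R.
    move=> j i _ _ /ingrp [_ _ h]; rewrite natrX mulrC; exact: ltW.
  move=> /(_ FB (fun j => mulr_ge0 (ltW v0) (ler0n _ _))) h.
  apply: le_trans h _; rewrite ler_wpM2l //.
  rewrite -mulr_sumr -natr_sum.
  have : ((\sum_(j < J.+1) 2 ^ j)%N%:R : R) <= (2 ^ J.+1)%:R.
    by rewrite ler_nat -(geo_sum J.+1) leq_addr.
  rewrite natrX exprS => h.
  have : v * (\sum_(j < J.+1) 2 ^ j)%N%:R <= v * (2 * 2 ^+ J) by rewrite ler_pM2l.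
  move=> h'; apply: le_trans h' _; nra.
have hWr : Wr <= (2 * m)%:R * (4 * a * q + 8 * a).
  have F0 : forall i, i \in rest -> 0 <= s i * ln (T / s i).
    move=> i ir; apply: mulr_ge0; first exact: ltW.
    apply: ln_ge0; rewrite ler_pdivlMr // mul1r; apply: sGT.
    by move: ir; rewrite inE => /andP [].
  have FB : forall j i, (j <= J)%N -> i \in rest -> i \in grp s j ->
      s i * ln (T / s i) <= v * q * (2 ^ j)%:R + v * (2 ^ j * (J.+1 - j))%:R.
    move=> j i jJ ir /ingrp [j0 h1 h2].
    have si0 := sp i.
    have -> : ln (T / s i) = q + ln (a / s i).
      rewrite /q -lnM ?posrE ?divr_gt0 //; congr ln; field; rewrite !gt_eqF //.
    have e1 : s i * q <= 2 ^+ j * v * q by apply: ler_wpM2r => //; exact: ltW.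
    set k := (J.+1 - j)%N.
    have hk0 : 0 <= ln (a / s i).
      by apply: ln_ge0; rewrite ler_pdivlMr // mul1r; exact: srest.
    have hk : ln (a / s i) <= k%:R.
      have : a / s i <= 2 ^+ k.
        rewrite ler_pdivrMr //; apply: (le_trans (ltW aJ2)).
        have -> : (J = k + j.-1)%N.
          by rewrite /k; apply: exp_arith.
        by rewrite exprD -mulrA ler_pM2l // exprn_gt0.
      rewrite -ler_ln ?posrE ?divr_gt0 ?exprn_gt0 // lnXn // => h.
      apply: le_trans h _; rewrite -[ln _ *+ _]mulr_natr -[X in _ <= X]mul1r.
      by apply: ler_wpM2r.
    have e2 : s i * ln (a / s i) <= 2 ^+ j * v * k%:R.
      by apply: ler_pM => //; [exact: ltW | exact: ltW].
    rewrite mulrDr; apply: le_trans (lerD e1 e2) _.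
    by rewrite natrM natrX le_eqVlt; apply/orP; left; apply/eqP; ring.
  have B0 : forall j, 0 <= v * q * (2 ^ j)%:R + v * (2 ^ j * (J.+1 - j))%:R.
    by move=> j; apply: addr_ge0; rewrite !mulr_ge0 // ltW.
  have h := @part_bound R m n J s Gr rest (fun i => s i * ln (T / s i))
    (fun j => v * q * (2 ^ j)%:R + v * (2 ^ j * (J.+1 - j))%:R) restG adm hex F0 FB B0.
  apply: le_trans h _; rewrite ler_wpM2l //.
  rewrite big_split /= -!mulr_sumr -!natr_sum.
  have g1 : ((\sum_(j < J.+1) 2 ^ j)%N%:R : R) <= 2 * 2 ^+ J.
    by rewrite -exprS -natrX ler_nat -(geo_sum J.+1) leq_addr.
  have g2 : ((\sum_(j < J.+1) 2 ^ j * (J.+1 - j))%N%:R : R) <= 4 * 2 ^+ J.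
    have -> : (4 : R) * 2 ^+ J = (2 ^ J.+2)%N%:R by rewrite natrX !exprS; ring.
    by rewrite ler_nat -(ag_sum J) -addnA; exact: leq_addr.
  have vq0 : 0 <= v * q by rewrite mulr_ge0 // ltW.
  have := ler_wpM2l vq0 g1; have := ler_wpM2l (ltW v0) g2.
  nra.
rewrite natrM -/M in hQ hWr.
have eq : q = p + l.
  rewrite /q /p /l -lnM ?posrE ?divr_gt0 //; congr ln; field; rewrite !gt_eqF //.
rewrite eq in hWr.
set X := M * a.
have X0 : 0 <= X by rewrite mulr_ge0 // ?ltW //; lra.
have p4 : p <= 4.
  have : S * p <= S * 4 by apply: le_trans hp _; apply: le_trans hQ _; rewrite /X in S2ma; nra.
  by rewrite ler_pM2l.
have l2 : 1 / 2 <= l.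
  have : 2 * a <= S by apply: le_trans S2ma; nra.
  move=> h2; have : S * (1 / 2) <= S * l by lra.
  by rewrite ler_pM2l.
have Xp : X * p <= X * 4 by apply: ler_wpM2l.
have Xl : X <= 2 * (X * l) by nra.
have XlW : X * l <= WL.
  apply: le_trans hWL; rewrite /X.
  have : 0 <= a * l by rewrite mulr_ge0 // ltW.
  nra.
have hG : WG <= 121 * WL.
  rewrite eWG.
  have e3 : 2 * M * (4 * a * (p + l) + 8 * a) = 8 * (X * p) + 8 * (X * l) + 16 * X.
    by rewrite /X; ring.
  rewrite e3 in hWr.
  have : Q <= 8 * X by rewrite /X; lra.
  move: Xp Xl XlW hWr hp; move: (X * p) (X * l) (S * p) => A B C; lra.
have WL0 : 0 <= WL by apply: le_trans XlW; nra.
rewrite (@Ent_W R n s Gr sp Tpos) (@Ent_W R n s L sp Spos) -/S -/T -/WL -/WG.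
have h1 : T^-1 * WG <= 121 * (S^-1 * WL).
  apply: (@le_trans _ _ (T^-1 * (121 * WL))); first by rewrite ler_wpM2l // invr_ge0 ltW.
  rewrite mulrCA; apply: ler_wpM2l; first lra.
  apply: ler_wpM2r => //; rewrite lef_pV2 ?posrE // TSQ; lra.
have ln20 : 0 <= ln (2 : R) by apply: ln_ge0; lra.
have EL0 : 0 <= S^-1 * WL by rewrite mulr_ge0 // invr_ge0 ltW.
set EG := T^-1 * WG in h1 *; set EL := S^-1 * WL in h1 EL0 *.
have c0 : 0 < (200%:R : R)^-1 by rewrite invr_gt0 ltr0n.
have : (200%:R : R)^-1 * EG <= (200%:R)^-1 * (121 * EL) by rewrite ler_wpM2l // ltW.
have : (200%:R : R)^-1 * (121 * EL) <= EL.
  rewrite mulrA -[X in _ <= X]mul1r ler_wpM2r //.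
  by rewrite ler_pdivrMl ?ltr0n // mulr1; lra.
have : 0 <= (200%:R : R)^-1 * ln 2 by rewrite mulr_ge0 // ltW.
lra.
Qed.
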